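(* Let $M>0$ and $0\le\alpha<1$, and let $r_0=r_0(\alpha)$ be the real root in $(0,1)$ of the equation \[(1-\alpha)(1+M)(1-r)^3=M\big(1-\alpha+(1+\alpha)r\big).\] Let $\mathcal{F}$ be the class of analytic functions $f(z)=z+\sum_{n\ge2}a_nz^n$ on $\mathbb{D}$ with $|a_n|\le M$ for all $n\ge2$. Then every $f\in\mathcal{F}$ satisfies $\left|\frac{zf''(z)}{f'(z)}\right|\le1-\alpha$ for $|z|\le r_0$; $r_0(\alpha)$ is the radius of convexity of order $\alpha$ of $\mathcal{F}$; and $r_0(1/2)$ is the radius of uniform convexity of $\mathcal{F}$. All results are sharp (in particular $r_0$ in the first statement cannot be replaced by any larger number).
   Context: $\mathbb{D}=\{z\in\mathbb{C}:|z|<1\}$. For a class $\mathcal{F}$ of analytic functions on $\mathbb{D}$ normalized by $f(0)=0$, $f'(0)=1$, and $0\le\alpha<1$, the radius of convexity of order $\alpha$ of $\mathcal{F}$ is the supremum of $r\in(0,1]$ such that every $f\in\mathcal{F}$ satisfies $f'(z)\ne0$ and $\operatorname{Re}\big(1+zf''(z)/f'(z)\big)>\alpha$ for $|z|<r$. The radius of uniform convexity of $\mathcal{F}$ is the supremum of $r\in(0,1]$ such that every $f\in\mathcal{F}$ satisfies $f'(z)\ne0$ and $\operatorname{Re}\big(1+zf''(z)/f'(z)\big)>\left|zf''(z)/f'(z)\right|$ for $|z|<r$. *)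

(* Defs.v *)
From Stdlib Require Import Reals.
From Coquelicot Require Import Coquelicot.
Open Scope R_scope.

Definition inF (M : R) (f : C -> C) : Prop :=
  exists a : nat -> C,
    a 0%nat = 0%C /\ a 1%nat = 1%C /\
    (forall n : nat, (2 <= n)%nat -> Cmod (a n) <= M) /\
    (forall z : C, Cmod z < 1 -> is_series (fun n => (a n * z ^ n)%C) (f z)).

Definition derivs_on_D (f f1 f2 : C -> C) : Prop :=
  forall z : C, Cmod z < 1 ->
    is_derive f z (f1 z) /\ is_derive f1 z (f2 z).

(* Radii r in (0,1] such that every f in F(M) is convex of order alpha on |z|<r;
   the radius of convexity of order alpha is the supremum of this set. *)
Definition convex_order_radii (M alpha : R) (r : R) : Prop :=
  0 < r <= 1 /\
  forall f, inF M f -> forall f1 f2, derivs_on_D f f1 f2 ->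
    forall z : C, Cmod z < r ->
      f1 z <> 0%C /\ alpha < Re (1 + z * f2 z / f1 z)%C.

Definition uniform_convex_radii (M : R) (r : R) : Prop :=
  0 < r <= 1 /\
  forall f, inF M f -> forall f1 f2, derivs_on_D f f1 f2 ->
    forall z : C, Cmod z < r ->
      f1 z <> 0%C /\ Cmod (z * f2 z / f1 z)%C < Re (1 + z * f2 z / f1 z)%C.

Definition r0_eq (M alpha r : R) : Prop :=
  (1 - alpha) * (1 + M) * (1 - r) ^ 3 = M * (1 - alpha + (1 + alpha) * r).

(* Main.v *)
Require Import Defs.
From Stdlib Require Import Reals Lra Psatz ClassicalEpsilon.
From Coquelicot Require Import Coquelicot.
Open Scope R_scope.


Lemma series_norm_le (a : nat -> C) (b : nat -> R) l L :
  is_series a l -> is_series b L -> (forall n, Cmod (a n) <= b n) -> Cmod l <= L.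
Proof.
  intros Ha Hb Hab.
  assert (H1 : is_lim_seq (fun N => norm (sum_n a N)) (norm l)).
  { apply (filterlim_comp _ _ _ (sum_n a) norm eventually (locally l)).
    exact Ha. apply filterlim_norm. }
  assert (H2 : is_lim_seq (sum_n b) L) by exact Hb.
  enough (HH : Rbar_le (@norm C_AbsRing C_NormedModule l) L) by (simpl in HH; exact HH).
  refine (is_lim_seq_le _ _ (Finite (norm l)) (Finite L) _ H1 H2).
  intros N. eapply Rle_trans. unfold sum_n. apply (norm_sum_n_m a 0 N).
  apply sum_n_m_le. intros k. apply Hab.
Qed.

Lemma C_series_lin (u v w : nat -> C) lu lv lw (c : C) :
  is_series u lu -> is_series v lv -> is_series w lw ->
  is_series (fun n => u n - v n - c * w n)%C (lu - lv - c * lw)%C.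
Proof.
  intros Hu Hv Hw.
  pose proof (is_series_minus _ _ _ _ Hu Hv) as H1.
  pose proof (is_series_scal c _ _ Hw) as H2.
  exact (is_series_minus _ _ _ _ H1 H2).
Qed.

Lemma R_series_lin (u v w : nat -> R) lu lv lw (c : R) :
  is_series u lu -> is_series v lv -> is_series w lw ->
  is_series (fun n => u n - v n - c * w n) (lu - lv - c * lw).
Proof.
  intros Hu Hv Hw.
  pose proof (is_series_minus _ _ _ _ Hu Hv) as H1.
  pose proof (is_series_scal c _ _ Hw) as H2.
  exact (is_series_minus _ _ _ _ H1 H2).
Qed.

Lemma Csub_add (x y : C) : x = (x - y + y)%C. Proof. ring. Qed.

Lemma C_series_shift (u : nat -> C) l :
  is_series u l -> is_series (fun n => u (S n)) (l - u 0%nat)%C.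
Proof.
  intros H. apply is_series_incr_1.
  match goal with |- is_series _ ?x => replace x with l; [exact H|] end.
  apply Csub_add.
Qed.

Lemma Rsub_add (x y : R) : x = (plus (x - y) y). Proof. unfold plus; simpl; ring. Qed.

Lemma R_series_shift (u : nat -> R) l :
  is_series u l -> is_series (fun n => u (S n)) (l - u 0%nat).
Proof.
  intros H. apply is_series_incr_1.
  match goal with |- is_series _ ?x => replace x with l; [exact H|] end.
  apply Rsub_add.
Qed.

Lemma C_series_unique (u : nat -> C) l1 l2 :
  is_series u l1 -> is_series u l2 -> l1 = l2.
Proof.
  intros H1 H2.
  assert (H0 : is_series (fun _ : nat => 0) 0).
  { unfold is_series. apply (filterlim_ext (fun _ => 0)).
    intros n. rewrite sum_n_const. ring. apply filterlim_const. }
  pose proof (is_series_minus _ _ _ _ H1 H2) as H3.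
  assert (Cmod (plus l1 (opp l2)) <= 0).
  { apply (series_norm_le _ _ _ _ H3 H0). intros n.
    change (Cmod (u n - u n)%C <= 0). replace (u n - u n)%C with (RtoC 0) by ring.
    rewrite Cmod_0; lra. }
  assert (Cmod (plus l1 (opp l2)) = 0) by (pose proof (Cmod_ge_0 (plus l1 (opp l2))); lra).
  apply Cmod_eq_0 in H4. change ((l1 - l2)%C = 0) in H4.
  apply Ceq_minus; auto.
Qed.

Ltac fixR := match goal with |- ?a = ?b => change (@eq R a b) end.

Lemma geom_R (s : R) : 0 <= s < 1 -> is_series (fun n => s ^ n) (/ (1 - s)).
Proof. intros Hs. apply is_series_geom. rewrite Rabs_pos_eq; lra. Qed.

Lemma ser1 (s : R) : 0 <= s < 1 -> is_series (fun n => INR (S n) * s ^ n) (/ (1 - s) ^ 2).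
Proof.
  intros Hs.
  pose proof (is_series_mult_pos _ _ _ _ (geom_R s Hs) (geom_R s Hs)
     (fun n => pow_le s n (proj1 Hs)) (fun n => pow_le s n (proj1 Hs))) as H.
  replace (/ (1 - s) ^ 2) with (/ (1 - s) * / (1 - s)) by (field; lra).
  refine (is_series_ext _ _ _ _ H).
  - intros n. rewrite (sum_eq _ (fun _ => s ^ n)).
    + rewrite sum_cte. apply Rmult_comm.
    + intros i Hi. rewrite <- pow_add. f_equal. lia.
Qed.

Lemma sum_id (N : nat) : sum_f_R0 (fun k => INR (S k)) N = INR (S N) * INR (S (S N)) / 2.
Proof.
  induction N as [|N IH].
  - simpl. field.
  - rewrite tech5, IH. rewrite !S_INR. field.
Qed.

Lemma ser2 (s : R) : 0 <= s < 1 ->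
  is_series (fun n => INR (S n) * INR (S (S n)) * s ^ n) (2 / (1 - s) ^ 3).
Proof.
  intros Hs.
  assert (Hp : forall n, 0 <= INR (S n) * s ^ n).
  { intros n. apply Rmult_le_pos. apply pos_INR. apply pow_le; lra. }
  pose proof (is_series_mult_pos _ _ _ _ (ser1 s Hs) (geom_R s Hs)
     Hp (fun n => pow_le s n (proj1 Hs))) as H.
  pose proof (is_series_scal 2 _ _ H) as H2.
  replace (2 / (1 - s) ^ 3) with (scal 2 (/ (1 - s) ^ 2 * / (1 - s))).
  refine (is_series_ext _ _ _ _ H2).
  - intros n. change (2 * sum_f_R0 (fun k => INR (S k) * s ^ k * s ^ (n - k)) n = INR (S n) * INR (S (S n)) * s ^ n).
    rewrite (sum_eq _ (fun k => INR (S k) * s ^ n)).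
    + rewrite <- scal_sum. rewrite sum_id. field.
    + intros i Hi. rewrite Rmult_assoc, <- pow_add. f_equal. f_equal. lia.
  - unfold scal; simpl; unfold mult; simpl. fixR. field. lra.
Qed.

Lemma Cmod_RtoC_nonneg (x : R) : 0 <= x -> Cmod (RtoC x) = x.
Proof. intros H. rewrite Cmod_R, Rabs_pos_eq; auto. Qed.

Lemma Pbound (z h : C) (n : nat) :
  Cmod ((z + h) ^ (S n) - z ^ (S n) - RtoC (INR (S n)) * h * z ^ n)%C <=
  (Cmod z + Cmod h) ^ (S n) - Cmod z ^ (S n) - INR (S n) * Cmod h * Cmod z ^ n.
Proof.
  induction n as [|n IH].
  - replace ((z + h) ^ 1 - z ^ 1 - RtoC (INR 1) * h * z ^ 0)%C with (RtoC 0).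
    + rewrite Cmod_0. simpl. lra.
    + simpl. ring.
  - set (s := Cmod z). set (k := Cmod h).
    assert (E : ((z + h) ^ S (S n) - z ^ S (S n) - RtoC (INR (S (S n))) * h * z ^ S n)%C =
       ((z + h) * ((z + h) ^ S n - z ^ S n - RtoC (INR (S n)) * h * z ^ n)
         + RtoC (INR (S n)) * (h * h) * z ^ n)%C).
    { rewrite (S_INR (S n)). rewrite RtoC_plus.
      rewrite !Cpow_S. ring. }
    rewrite E.
    eapply Rle_trans. apply Cmod_triangle.
    rewrite !Cmod_mult, Cmod_pow, Cmod_RtoC_nonneg by apply pos_INR.
    fold s. fold k.
    assert (Hzh : Cmod (z + h) <= s + k) by apply Cmod_triangle.
    assert (H0 : 0 <= Cmod ((z + h) ^ S n - z ^ S n - RtoC (INR (S n)) * h * z ^ n)%C) by apply Cmod_ge_0.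
    assert (Hs : 0 <= s) by apply Cmod_ge_0.
    assert (Hk : 0 <= k) by apply Cmod_ge_0.
    eapply Rle_trans.
    apply Rplus_le_compat_r.
    apply Rmult_le_compat; [apply Cmod_ge_0|exact H0|exact Hzh|exact IH].
    apply Req_le. rewrite (S_INR (S n)). unfold s, k. set (X := INR (S n)). simpl. ring.
Qed.

Definition ca (a : nat -> C) (n : nat) : R := Cmod (a n).
Definition dC (a : nat -> C) (n : nat) : C := (RtoC (INR (S n)) * a (S n))%C.
Definition good (a : nat -> C) := Rbar_le 1 (CV_radius (ca a)).

Lemma good_lt a x : good a -> Rabs x < 1 -> Rbar_lt (Rabs x) (CV_radius (ca a)).
Proof. unfold good. destruct (CV_radius (ca a)); simpl; intros; lra. Qed.

Lemma good_d a : good a -> good (dC a).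
Proof.
  unfold good. rewrite (CV_radius_ext (ca (dC a)) (PS_derive (ca a))).
  - rewrite CV_radius_derive. auto.
  - intros n. unfold ca, dC, PS_derive. rewrite Cmod_mult, Cmod_RtoC_nonneg by apply pos_INR. reflexivity.
Qed.

Lemma pser_abs a x : good a -> 0 <= x < 1 ->
  is_series (fun n => ca a n * x ^ n) (PSeries (ca a) x).
Proof.
  intros Ha Hx. apply is_pseries_R. apply PSeries_correct. apply CV_radius_inside.
  apply good_lt; auto. rewrite Rabs_pos_eq; lra.
Qed.

Lemma pser_der a x : good a -> 0 <= x < 1 ->
  is_series (fun n => PS_derive (ca a) n * x ^ n) (PSeries (PS_derive (ca a)) x).
Proof.
  intros Ha Hx. apply is_pseries_R. apply PSeries_correct. apply ex_pseries_derive.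
  apply good_lt; auto. rewrite Rabs_pos_eq; lra.
Qed.

Lemma Cadd_sub (y z : C) : y = (z + (y - z))%C. Proof. ring. Qed.

Lemma deriv_series a F G :
  good a ->
  (forall z, Cmod z < 1 -> is_series (fun n => a n * z ^ n)%C (F z)) ->
  (forall z, Cmod z < 1 -> is_series (fun n => dC a n * z ^ n)%C (G z)) ->
  forall z, Cmod z < 1 -> is_derive F z (G z).
Proof.
  intros Ha HF HG z Hz.
  split. { apply is_linear_scal_l. }
  intros x Hx. apply (@is_filter_lim_locally_unique C_AbsRing (AbsRing_NormedModule C_AbsRing)) in Hx. subst x.
  intros eps.
  set (s := Cmod z).
  assert (Hs0 : 0 <= s) by apply Cmod_ge_0.
  assert (Hrad : Rbar_lt (Rabs s) (CV_radius (ca a))) by (apply good_lt; auto; rewrite Rabs_pos_eq; auto).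
  pose proof (is_derive_PSeries _ _ Hrad) as Hd. apply is_derive_Reals in Hd.
  destruct (Hd eps (cond_pos eps)) as [d1 Hd1].
  assert (Hdpos : 0 < Rmin d1 ((1 - s)/2)) by (apply Rmin_pos; [apply cond_pos|unfold s; lra]).
  apply (filter_imp (@ball_norm C_AbsRing (AbsRing_NormedModule C_AbsRing) z (mkposreal _ Hdpos))); [|apply (@locally_ball_norm C_AbsRing (AbsRing_NormedModule C_AbsRing))].
  intros y Hy. unfold ball_norm in Hy. simpl in Hy.
  change (Cmod (F y - F z - (y - z) * G z)%C <= eps * Cmod (y - z)%C).
  change (Cmod (y - z)%C < Rmin d1 ((1-s)/2)) in Hy.
  set (h := (y - z)%C) in *. set (k := Cmod h) in *.
  assert (Hyz : y = (z + h)%C) by (unfold h; apply Cadd_sub).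
  destruct (Req_dec k 0) as [Hk0|Hk0].
  { assert (Hh : h = RtoC 0) by (apply Cmod_eq_0; auto).
    rewrite Hyz, Hh. replace (F (z + RtoC 0)%C - F z - RtoC 0 * G z)%C with (RtoC 0).
    rewrite Cmod_0. fold k. rewrite Hk0. lra.
    replace (z + RtoC 0)%C with z by ring. ring. }
  assert (Hkpos : 0 < k) by (pose proof (Cmod_ge_0 h); unfold k in *; lra).
  assert (Hk1 : k < d1) by (pose proof (Rmin_l d1 ((1-s)/2)); lra).
  assert (Hk2 : k < (1-s)/2) by (pose proof (Rmin_r d1 ((1-s)/2)); lra).
  assert (Hy1 : Cmod y < 1).
  { rewrite Hyz. pose proof (Cmod_triangle z h). fold s in H. fold k in H. lra. }
  pose proof (C_series_shift _ _ (HF y Hy1)) as S1.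
  pose proof (C_series_shift _ _ (HF z Hz)) as S2.
  pose proof (C_series_lin _ _ _ _ _ _ h S1 S2 (HG z Hz)) as S3.
  pose proof (R_series_shift _ _ (pser_abs a (s+k) Ha ltac:(lra))) as R1.
  pose proof (R_series_shift _ _ (pser_abs a s Ha ltac:(lra))) as R2.
  pose proof (pser_der a s Ha ltac:(lra)) as R3.
  pose proof (R_series_lin _ _ _ _ _ _ k R1 R2 R3) as R4.
  pose proof (series_norm_le _ _ _ _ S3 R4) as Hle.
  assert (Hval : ((F y - a 0%nat * y ^ 0) - (F z - a 0%nat * z ^ 0) - h * G z)%C = (F y - F z - h * G z)%C)
    by (simpl; ring).
  cbv beta in Hle. rewrite Hval in Hle.
  specialize (Hd1 k Hk0 ltac:(rewrite Rabs_pos_eq; lra)).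
  set (A := PSeries (ca a)) in *.
  set (A' := PSeries (PS_derive (ca a)) s) in *.
  assert (Hbd : A (s + k) - A s - k * A' <= eps * k).
  { apply Rabs_lt_between in Hd1. destruct Hd1 as [_ Hd1].
    assert (Hq : (A (s + k) - A s) / k < eps + A') by lra.
    apply (Rmult_lt_compat_r k) in Hq; auto.
    unfold Rdiv in Hq. rewrite Rmult_assoc, Rinv_l in Hq by lra. lra. }
  assert (Hterm : forall n : nat, Cmod (a (S n) * y ^ S n - a (S n) * z ^ S n - h * (dC a n * z ^ n))%C <=
      ca a (S n) * (s + k) ^ S n - ca a (S n) * s ^ S n - k * (PS_derive (ca a) n * s ^ n)).
  { intros n. rewrite Hyz.
    replace (a (S n) * (z + h) ^ S n - a (S n) * z ^ S n - h * (dC a n * z ^ n))%C with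
      (a (S n) * ((z + h) ^ S n - z ^ S n - RtoC (INR (S n)) * h * z ^ n))%C by (unfold dC; ring).
    rewrite Cmod_mult.
    eapply Rle_trans.
    apply Rmult_le_compat_l. apply Cmod_ge_0. apply Pbound.
    fold s k. unfold ca, PS_derive. apply Req_le. ring. }
  specialize (Hle Hterm). simpl pow in Hle. fold k.
  assert (E2 : A (s + k) - ca a 0%nat * 1 - (A s - ca a 0%nat * 1) - k * A' = A (s + k) - A s - k * A') by ring.
  rewrite E2 in Hle. lra.
Qed.

Lemma ex_Cser a z : good a -> Cmod z < 1 -> ex_series (fun n => a n * z ^ n)%C.
Proof.
  intros Ha Hz.
  apply (@ex_series_le C_AbsRing C_CompleteNormedModule (fun n => a n * z ^ n)%C (fun n => ca a n * Cmod z ^ n)).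
  - intros n. change (Cmod (a n * z ^ n)%C <= ca a n * Cmod z ^ n).
    rewrite Cmod_mult, Cmod_pow. unfold ca. lra.
  - eexists. apply pser_abs; auto. split; [apply Cmod_ge_0|auto].
Qed.

Definition Csum (a : nat -> C) (z : C) : C :=
  epsilon (inhabits (RtoC 0)) (fun l => is_series (fun n => a n * z ^ n)%C l).

Lemma Csum_spec a z : good a -> Cmod z < 1 -> is_series (fun n => a n * z ^ n)%C (Csum a z).
Proof.
  intros Ha Hz. unfold Csum. apply epsilon_spec. apply ex_Cser; auto.
Qed.

Lemma inF_good M f : inF M f -> exists a, good a /\ a 0%nat = RtoC 0 /\ a 1%nat = RtoC 1 /\
   (forall n, (2 <= n)%nat -> Cmod (a n) <= M) /\
   (forall z, Cmod z < 1 -> is_series (fun n => a n * z ^ n)%C (f z)).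
Proof.
  intros [a [H0 [H1 [HM Hs]]]]. exists a. repeat split; auto.
  unfold good. destruct (CV_radius_bounded (ca a)) as [Hub _].
  apply Hub. exists (Rmax M 1). intros n. rewrite pow1, Rmult_1_r. unfold ca.
  rewrite Rabs_pos_eq by apply Cmod_ge_0.
  destruct n as [|[|n]].
  - rewrite H0, Cmod_0. pose proof (Rmax_r M 1). lra.
  - rewrite H1, Cmod_1. apply Rmax_r.
  - eapply Rle_trans. apply HM. lia. apply Rmax_l.
Qed.

Lemma taylor2 a f f1 f2 : good a ->
  (forall z, Cmod z < 1 -> is_series (fun n => a n * z ^ n)%C (f z)) ->
  derivs_on_D f f1 f2 ->
  forall z, Cmod z < 1 ->
    is_series (fun n => dC a n * z ^ n)%C (f1 z) /\
    is_series (fun n => dC (dC a) n * z ^ n)%C (f2 z).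
Proof.
  intros Ha Hf Hd.
  assert (E1 : forall z, Cmod z < 1 -> f1 z = Csum (dC a) z).
  { intros z Hz.
    pose proof (deriv_series a f (Csum (dC a)) Ha Hf (fun w Hw => Csum_spec _ _ (good_d _ Ha) Hw) z Hz) as D1.
    destruct (Hd z Hz) as [D2 _].
    apply is_C_derive_unique in D1. apply is_C_derive_unique in D2. congruence. }
  assert (Hf1 : forall z, Cmod z < 1 -> is_series (fun n => dC a n * z ^ n)%C (f1 z)).
  { intros z Hz. rewrite E1 by auto. apply Csum_spec; auto. apply good_d; auto. }
  intros z Hz. split; auto.
  pose proof (deriv_series (dC a) f1 (Csum (dC (dC a))) (good_d _ Ha) Hf1
     (fun w Hw => Csum_spec _ _ (good_d _ (good_d _ Ha)) Hw) z Hz) as D1.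
  destruct (Hd z Hz) as [_ D2].
  apply is_C_derive_unique in D1. apply is_C_derive_unique in D2.
  rewrite <- D2, D1. apply Csum_spec; auto. apply good_d, good_d; auto.
Qed.

Lemma bounds M f f1 f2 z : 0 < M -> inF M f -> derivs_on_D f f1 f2 -> Cmod z < 1 ->
  Cmod (f1 z - 1)%C <= M * (/ (1 - Cmod z) ^ 2 - 1) /\
  Cmod (f2 z) <= M * (2 / (1 - Cmod z) ^ 3).
Proof.
  intros HM Hf Hd Hz.
  destruct (inF_good M f Hf) as [a [Ha [H0 [H1 [Hb Hs]]]]].
  destruct (taylor2 a f f1 f2 Ha Hs Hd z Hz) as [S1 S2].
  set (s := Cmod z).
  assert (Hs0 : 0 <= s < 1) by (split; [apply Cmod_ge_0|auto]).
  split.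
  - pose proof (C_series_shift _ _ S1) as T1.
    assert (E : (f1 z - dC a 0%nat * z ^ 0)%C = (f1 z - 1)%C).
    { unfold dC. rewrite H1. simpl. ring. }
    cbv beta in T1. rewrite E in T1.
    pose proof (R_series_shift _ _ (ser1 s Hs0)) as T2.
    pose proof (is_series_scal M _ _ T2) as T3.
    change (is_series (fun n => M * (INR (S (S n)) * s ^ S n)) (M * (/ (1 - s) ^ 2 - INR 1 * s ^ 0))) in T3.
    replace (M * (/ (1 - s) ^ 2 - INR 1 * s ^ 0)) with (M * (/ (1 - s) ^ 2 - 1)) in T3 by (simpl; ring).
    apply (series_norm_le _ _ _ _ T1 T3).
    intros n.
    unfold dC. rewrite !Cmod_mult, Cmod_pow, Cmod_RtoC_nonneg by apply pos_INR. fold s.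
    assert (Hc : Cmod (a (S (S n))) <= M) by (apply Hb; lia).
    assert (0 <= INR (S (S n)) * s ^ S n) by (apply Rmult_le_pos; [apply pos_INR|apply pow_le; lra]).
    assert (0 <= Cmod (a (S (S n)))) by apply Cmod_ge_0.
    nra.
  - pose proof (is_series_scal M _ _ (ser2 s Hs0)) as T3.
    change (is_series (fun n => M * (INR (S n) * INR (S (S n)) * s ^ n)) (M * (2 / (1 - s) ^ 3))) in T3.
    apply (series_norm_le _ _ _ _ S2 T3).
    intros n.
    unfold dC. rewrite !Cmod_mult, Cmod_pow, !Cmod_RtoC_nonneg by apply pos_INR. fold s.
    assert (Hc : Cmod (a (S (S n))) <= M) by (apply Hb; lia).
    assert (0 <= INR (S n) * INR (S (S n)) * s ^ n) by
      (apply Rmult_le_pos; [apply Rmult_le_pos; apply pos_INR|apply pow_le; lra]).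
    assert (0 <= Cmod (a (S (S n)))) by apply Cmod_ge_0.
    nra.
Qed.

Definition phi (M alpha s : R) := (1 - alpha) * (1 + M) * (1 - s) ^ 3 - M * (1 - alpha + (1 + alpha) * s).

Lemma phi_mono M alpha s t : 0 < M -> 0 <= alpha < 1 -> s <= t -> t < 1 ->
  phi M alpha t + M * (1 + alpha) * (t - s) <= phi M alpha s.
Proof.
  intros HM Ha Hst Ht. unfold phi.
  assert (H : (1 - s) ^ 3 - (1 - t) ^ 3 = (t - s) * ((1 - s) ^ 2 + (1 - s) * (1 - t) + (1 - t) ^ 2)) by ring.
  assert (0 <= (t - s) * ((1 - s) ^ 2 + (1 - s) * (1 - t) + (1 - t) ^ 2)).
  { apply Rmult_le_pos. lra. nra. }
  assert (0 <= (1 - alpha) * (1 + M)) by nra.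
  nra.
Qed.

Lemma alg_core M alpha s : 0 < M -> 0 <= alpha < 1 -> 0 <= s < 1 -> 0 <= phi M alpha s ->
  0 < 1 - M * (/ (1 - s) ^ 2 - 1) /\
  (1 - alpha) * (1 - M * (/ (1 - s) ^ 2 - 1)) - s * (M * (2 / (1 - s) ^ 3))
    = phi M alpha s / (1 - s) ^ 3.
Proof.
  intros HM Ha Hs Hp.
  set (u := 1 - s).
  assert (Hu : 0 < u <= 1) by (unfold u; lra).
  assert (HK : (1 - alpha) * u * ((1 + M) * u ^ 2 - M) = phi M alpha s + 2 * M * s).
  { unfold phi. fold u. replace s with (1 - u) by (unfold u; ring). ring. }
  assert (HK2 : 0 < (1 + M) * u ^ 2 - M).
  { destruct (Req_dec s 0) as [H0|H0].
    - unfold u. rewrite H0. lra.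
    - assert (0 < (1 - alpha) * u * ((1 + M) * u ^ 2 - M)) by nra.
      assert (0 < (1 - alpha) * u) by nra.
      apply (Rmult_lt_reg_l ((1 - alpha) * u)); auto. lra. }
  split.
  - replace (1 - M * (/ u ^ 2 - 1)) with (((1 + M) * u ^ 2 - M) / u ^ 2) by (field; lra).
    apply Rdiv_lt_0_compat; auto. apply pow_lt; lra.
  - unfold phi. fold u. replace s with (1 - u) by (unfold u; ring). field. lra.
Qed.

Lemma est M f f1 f2 z : 0 < M -> inF M f -> derivs_on_D f f1 f2 -> Cmod z < 1 ->
  0 < 1 - M * (/ (1 - Cmod z) ^ 2 - 1) ->
  f1 z <> RtoC 0 /\
  Cmod (z * f2 z / f1 z)%C * (1 - M * (/ (1 - Cmod z) ^ 2 - 1)) <= Cmod z * (M * (2 / (1 - Cmod z) ^ 3)).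
Proof.
  intros HM Hf Hd Hz HD.
  destruct (bounds M f f1 f2 z HM Hf Hd Hz) as [B1 B2].
  set (D := 1 - M * (/ (1 - Cmod z) ^ 2 - 1)) in *.
  assert (Hf1 : D <= Cmod (f1 z)).
  { assert (E : RtoC 1 = (f1 z - (f1 z - 1))%C) by ring.
    pose proof (Cmod_triangle (f1 z) (- (f1 z - 1))%C) as T.
    rewrite Cmod_opp in T. change (f1 z + - (f1 z - 1))%C with (f1 z - (f1 z - 1))%C in T.
    rewrite <- E, Cmod_1 in T. unfold D. lra. }
  assert (Hnz : f1 z <> RtoC 0).
  { intros H. rewrite H, Cmod_0 in Hf1. lra. }
  split; auto.
  rewrite Cmod_div, Cmod_mult by auto.
  assert (Hp : 0 < Cmod (f1 z)) by lra.
  assert (0 <= Cmod z) by apply Cmod_ge_0.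
  assert (0 <= Cmod (f2 z)) by apply Cmod_ge_0.
  apply (Rle_trans _ (Cmod z * Cmod (f2 z) / Cmod (f1 z) * Cmod (f1 z))).
  - apply Rmult_le_compat_l; auto. apply Rdiv_le_0_compat; auto. nra.
  - replace (Cmod z * Cmod (f2 z) / Cmod (f1 z) * Cmod (f1 z)) with (Cmod z * Cmod (f2 z)) by (field; lra).
    apply Rmult_le_compat_l; auto.
Qed.

Lemma main_est M alpha r0 f f1 f2 z : 0 < M -> 0 <= alpha < 1 -> 0 < r0 < 1 ->
  r0_eq M alpha r0 -> inF M f -> derivs_on_D f f1 f2 -> Cmod z <= r0 ->
  f1 z <> RtoC 0 /\ Cmod (z * f2 z / f1 z)%C <= 1 - alpha /\
  (Cmod z < r0 -> Cmod (z * f2 z / f1 z)%C < 1 - alpha).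
Proof.
  intros HM Ha Hr0 Heq Hf Hd Hz.
  set (s := Cmod z) in *.
  assert (Hs : 0 <= s < 1) by (split; [apply Cmod_ge_0|lra]).
  assert (Hp0 : phi M alpha r0 = 0) by (unfold phi; unfold r0_eq in Heq; lra).
  pose proof (phi_mono M alpha s r0 HM Ha Hz ltac:(lra)) as Hm.
  assert (Hpos : 0 <= M * (1 + alpha) * (r0 - s)) by (apply Rmult_le_pos; [apply Rmult_le_pos|]; lra).
  assert (Hps : 0 <= phi M alpha s) by lra.
  destruct (alg_core M alpha s HM Ha Hs Hps) as [HD Hid].
  destruct (est M f f1 f2 z HM Hf Hd ltac:(unfold s in Hs; lra) HD) as [Hnz Hw].
  fold s in Hw.
  set (D := 1 - M * (/ (1 - s) ^ 2 - 1)) in *.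
  set (w := Cmod (z * f2 z / f1 z)%C) in *.
  assert (Hu : 0 < (1 - s) ^ 3) by (apply pow_lt; lra).
  assert (Hq : 0 <= phi M alpha s / (1 - s) ^ 3) by (apply Rdiv_le_0_compat; lra).
  split; auto. split.
  - apply (Rmult_le_reg_r D); auto. lra.
  - intros Hlt.
    assert (0 < M * (1 + alpha) * (r0 - s)) by (apply Rmult_lt_0_compat; [apply Rmult_lt_0_compat|]; lra).
    assert (0 < phi M alpha s) by lra.
    assert (Hq2 : 0 < phi M alpha s / (1 - s) ^ 3) by (apply Rdiv_lt_0_compat; lra).
    apply (Rmult_lt_reg_r D); auto. lra.
Qed.

Lemma RtoC_sum_n (x : nat -> R) N : RtoC (sum_n x N) = sum_n (fun n => RtoC (x n)) N.
Proof.
  induction N as [|N IH].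
  - rewrite !sum_O. reflexivity.
  - rewrite !sum_Sn, <- IH. change (RtoC (sum_n x N + x (S N)) = (RtoC (sum_n x N) + RtoC (x (S N)))%C).
    apply RtoC_plus.
Qed.

Lemma RtoC_series (x : nat -> R) l : is_series x l -> is_series (fun n => RtoC (x n)) (RtoC l).
Proof.
  intros H. unfold is_series in *.
  apply (filterlim_ext (fun N => RtoC (sum_n x N))).
  { intros N. apply RtoC_sum_n. }
  apply (filterlim_comp _ _ _ (sum_n x) RtoC eventually (locally l)); auto.
  apply (@filterlim_locally_ball_norm C_AbsRing R C_NormedModule). apply locally_filter.
  intros eps.
  apply (filter_imp (@ball_norm R_AbsRing R_NormedModule l eps)); [|apply locally_ball_norm].
  intros y Hy. unfold ball_norm in *. change (Cmod (RtoC y - RtoC l)%C < eps).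
  rewrite <- RtoC_minus, Cmod_R. exact Hy.
Qed.

Definition ar (M : R) (n : nat) : R := match n with 0%nat => 0 | 1%nat => 1 | _ => - M end.
Definition ae (M : R) (n : nat) : C := RtoC (ar M n).

Lemma ae_good M : 0 < M -> good (ae M).
Proof.
  intros HM. unfold good. destruct (CV_radius_bounded (ca (ae M))) as [Hub _].
  apply Hub. exists (Rmax M 1). intros n. rewrite pow1, Rmult_1_r. unfold ca, ae.
  rewrite Rabs_pos_eq by apply Cmod_ge_0. rewrite Cmod_R.
  destruct n as [|[|n]]; simpl.
  - rewrite Rabs_R0. pose proof (Rmax_r M 1). lra.
  - rewrite Rabs_R1. apply Rmax_r.
  - rewrite Rabs_Ropp, Rabs_pos_eq by lra. apply Rmax_l.
Qed.

Lemma extremal M : 0 < M ->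
  exists f f1 f2, inF M f /\ derivs_on_D f f1 f2 /\
    forall t, 0 <= t < 1 ->
      f1 (RtoC t) = RtoC (1 - M * (/ (1 - t) ^ 2 - 1)) /\
      f2 (RtoC t) = RtoC (- (M * (2 / (1 - t) ^ 3))).
Proof.
  intros HM.
  pose proof (ae_good M HM) as Hg.
  exists (Csum (ae M)), (Csum (dC (ae M))), (Csum (dC (dC (ae M)))).
  split; [|split].
  - exists (ae M). split; [reflexivity|]. split; [reflexivity|]. split.
    + intros n Hn. unfold ae. rewrite Cmod_R. destruct n as [|[|n]]; try lia.
      simpl. rewrite Rabs_Ropp, Rabs_pos_eq; lra.
    + intros z Hz. apply Csum_spec; auto.
  - intros z Hz. split.
    + apply (deriv_series (ae M)); auto. intros w Hw; apply Csum_spec; auto.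
      intros w Hw; apply Csum_spec; auto. apply good_d; auto.
    + apply (deriv_series (dC (ae M))); auto. apply good_d; auto.
      intros w Hw; apply Csum_spec; auto. apply good_d; auto.
      intros w Hw; apply Csum_spec; auto. apply good_d, good_d; auto.
  - intros t Ht.
    assert (Hct : Cmod (RtoC t) < 1) by (rewrite Cmod_R, Rabs_pos_eq; lra).
    split.
    + apply (C_series_unique (fun n => dC (ae M) n * RtoC t ^ n)%C).
      * apply Csum_spec; auto. apply good_d; auto.
      * set (x := fun n => INR (S n) * ar M (S n) * t ^ n).
        assert (Hx : is_series x (1 - M * (/ (1 - t) ^ 2 - 1))).
        { apply is_series_decr_1.
          pose proof (is_series_scal (- M) _ _ (R_series_shift _ _ (ser1 t Ht))) as T.
          change (is_series (fun n => - M * (INR (S (S n)) * t ^ S n)) (- M * (/ (1 - t) ^ 2 - INR 1 * t ^ 0))) in T.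
          eapply is_series_ext; [|match goal with |- is_series _ ?v => replace v with (- M * (/ (1 - t) ^ 2 - INR 1 * t ^ 0)); [exact T|] end].
          - intros n. unfold x. simpl ar. fixR. ring.
          - unfold x. simpl. unfold plus, opp; simpl. fixR. ring. }
        pose proof (RtoC_series _ _ Hx) as Hc.
        refine (is_series_ext _ _ _ _ Hc).
        intros n. unfold x, dC, ae. rewrite <- RtoC_pow, <- !RtoC_mult. reflexivity.
    + apply (C_series_unique (fun n => dC (dC (ae M)) n * RtoC t ^ n)%C).
      * apply Csum_spec; auto. apply good_d, good_d; auto.
      * pose proof (is_series_scal (- M) _ _ (ser2 t Ht)) as T.
        change (is_series (fun n => - M * (INR (S n) * INR (S (S n)) * t ^ n)) (- M * (2 / (1 - t) ^ 3))) in T.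
        pose proof (RtoC_series _ _ T) as Hc.
        replace (- (M * (2 / (1 - t) ^ 3))) with (- M * (2 / (1 - t) ^ 3)) by ring.
        refine (is_series_ext _ _ _ _ Hc).
        intros n. unfold dC, ae. rewrite <- RtoC_pow, <- !RtoC_mult. simpl ar. f_equal. ring.
Qed.
Lemma ident M alpha s : s < 1 ->
  (1 - alpha) * (1 - M * (/ (1 - s) ^ 2 - 1)) - s * (M * (2 / (1 - s) ^ 3))
    = phi M alpha s / (1 - s) ^ 3.
Proof. intros Hs. unfold phi. field. lra. Qed.

Lemma pick M alpha r0 r : 0 < M -> 0 <= alpha < 1 -> 0 < r0 < 1 -> r0_eq M alpha r0 -> r0 < r ->
  exists t, r0 < t /\ t < r /\ t < 1 /\ 0 < 1 - M * (/ (1 - t) ^ 2 - 1) /\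
    t * (- (M * (2 / (1 - t) ^ 3))) / (1 - M * (/ (1 - t) ^ 2 - 1)) < - (1 - alpha).
Proof.
  intros HM Ha Hr0 Heq Hr.
  assert (Hp0 : phi M alpha r0 = 0) by (unfold phi; unfold r0_eq in Heq; lra).
  set (u0 := 1 - r0).
  assert (Hd0 : M < (1 + M) * u0 ^ 2).
  { assert (HK : (1 - alpha) * u0 * ((1 + M) * u0 ^ 2 - M) = phi M alpha r0 + 2 * M * r0).
    { unfold phi. fold u0. replace r0 with (1 - u0) by (unfold u0; ring). ring. }
    assert (0 < (1 - alpha) * u0) by (unfold u0; nra).
    assert (0 < (1 - alpha) * u0 * ((1 + M) * u0 ^ 2 - M)) by nra.
    assert (0 < (1 + M) * u0 ^ 2 - M).
    { apply (Rmult_lt_reg_l ((1 - alpha) * u0)); auto. lra. }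
    lra. }
  set (d0 := (1 + M) * u0 ^ 2 - M).
  assert (Hd0' : 0 < d0) by (unfold d0; lra).
  set (eta := Rmin ((r - r0) / 2) (Rmin ((1 - r0) / 2) (d0 / (4 * (1 + M))))).
  assert (He1 : eta <= (r - r0) / 2) by apply Rmin_l.
  assert (He2 : eta <= (1 - r0) / 2) by (eapply Rle_trans; [apply Rmin_r|apply Rmin_l]).
  assert (He3 : eta <= d0 / (4 * (1 + M))) by (eapply Rle_trans; [apply Rmin_r|apply Rmin_r]).
  assert (He0 : 0 < eta).
  { unfold eta. apply Rmin_pos. lra. apply Rmin_pos. lra. apply Rdiv_lt_0_compat. unfold d0; lra. lra. }
  set (t := r0 + eta).
  exists t.
  assert (Ht1 : t < 1) by (unfold t; lra).
  set (u := 1 - t).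
  assert (Hu : 0 < u) by (unfold u; lra).
  assert (Huu0 : u = u0 - eta) by (unfold u, u0, t; ring).
  assert (He3' : 4 * (1 + M) * eta <= d0).
  { apply (Rmult_le_compat_l (4 * (1 + M))) in He3; [|lra].
    replace (4 * (1 + M) * (d0 / (4 * (1 + M)))) with d0 in He3 by (field; lra). lra. }
  assert (HD : 0 < (1 + M) * u ^ 2 - M).
  { rewrite Huu0. assert (u0 <= 1) by (unfold u0; lra).
    assert (0 <= (1 + M) * eta ^ 2) by nra.
    assert ((1 + M) * (u0 - eta) ^ 2 - M = d0 - 2 * (1 + M) * u0 * eta + (1 + M) * eta ^ 2) by (unfold d0; ring).
    assert ((1 + M) * u0 * eta <= (1 + M) * eta) by (apply Rmult_le_compat_r; [lra|]; nra).
    lra. }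
  assert (HF1 : 1 - M * (/ (1 - t) ^ 2 - 1) = ((1 + M) * u ^ 2 - M) / u ^ 2) by (fold u; field; lra).
  assert (HF1p : 0 < 1 - M * (/ (1 - t) ^ 2 - 1)) by (rewrite HF1; apply Rdiv_lt_0_compat; auto; apply pow_lt; lra).
  repeat split; try (unfold t; lra); auto.
  pose proof (phi_mono M alpha r0 t HM Ha ltac:(unfold t; lra) Ht1) as Hm.
  assert (0 < M * (1 + alpha) * (t - r0)) by (apply Rmult_lt_0_compat; [apply Rmult_lt_0_compat|]; unfold t; lra).
  assert (Hpt : phi M alpha t < 0) by lra.
  pose proof (ident M alpha t Ht1) as Hid.
  assert (Hu3 : 0 < (1 - t) ^ 3) by (apply pow_lt; lra).
  assert (Hq : phi M alpha t / (1 - t) ^ 3 < 0).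
  { unfold Rdiv. apply Rmult_neg_pos; auto. apply Rinv_0_lt_compat; auto. }
  unfold u in *.
  set (F1 := 1 - M * (/ (1 - t) ^ 2 - 1)) in *.
  apply (Rmult_lt_reg_r F1); auto.
  replace (t * - (M * (2 / (1 - t) ^ 3)) / F1 * F1) with (- (t * (M * (2 / (1 - t) ^ 3)))) by (field; lra).
  lra.
Qed.

Lemma ext_w t F1 F2 : F1 <> 0 -> (RtoC t * RtoC F2 / RtoC F1)%C = RtoC (t * F2 / F1).
Proof. intros H. rewrite <- RtoC_mult, <- RtoC_div by auto. reflexivity. Qed.

Theorem corollary3p7 (M alpha r0 r1 : R) :
  0 < M -> 0 <= alpha < 1 ->
  0 < r0 < 1 -> r0_eq M alpha r0 ->
  0 < r1 < 1 -> r0_eq M (1/2) r1 ->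
  (* (i) |z f''/f'| <= 1 - alpha on |z| <= r0 *)
  (forall f, inF M f -> forall f1 f2, derivs_on_D f f1 f2 ->
     forall z : C, Cmod z <= r0 ->
       f1 z <> 0%C /\ Cmod (z * f2 z / f1 z)%C <= 1 - alpha) /\
  (* sharpness of (i): r0 cannot be replaced by any larger number *)
  (forall r, r0 < r ->
     exists f, inF M f /\ exists f1 f2, derivs_on_D f f1 f2 /\
       exists z : C, Cmod z < 1 /\ Cmod z <= r /\
         (f1 z = 0%C \/ 1 - alpha < Cmod (z * f2 z / f1 z)%C)) /\
  (* (ii) r0(alpha) is the radius of convexity of order alpha *)
  is_lub (convex_order_radii M alpha) r0 /\
  (* (iii) r0(1/2) is the radius of uniform convexity *)
  is_lub (uniform_convex_radii M) r1.
Proof.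
  intros HM Ha Hr0 Heq Hr1 Heq1.
  destruct (extremal M HM) as [fe [fe1 [fe2 [Hfe [Hde Hval]]]]].
  assert (Hw : forall t, 0 < t < 1 -> 0 < 1 - M * (/ (1 - t) ^ 2 - 1) ->
     Cmod (RtoC t) = t /\
     (RtoC t * fe2 (RtoC t) / fe1 (RtoC t))%C =
       RtoC (t * (- (M * (2 / (1 - t) ^ 3))) / (1 - M * (/ (1 - t) ^ 2 - 1)))).
  { intros t Ht HF. split. rewrite Cmod_R, Rabs_pos_eq; lra.
    destruct (Hval t ltac:(lra)) as [E1 E2]. rewrite E1, E2. apply ext_w. lra. }
  split; [|split; [|split]].
  - intros f Hf f1 f2 Hd z Hz.
    destruct (main_est M alpha r0 f f1 f2 z HM Ha Hr0 Heq Hf Hd Hz) as [A [B _]]. auto.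
  - intros r Hr.
    destruct (pick M alpha r0 r HM Ha Hr0 Heq Hr) as [t [Ht0 [Htr [Ht1 [HF1 Hwt]]]]].
    exists fe. split; auto. exists fe1, fe2. split; auto. exists (RtoC t).
    destruct (Hw t ltac:(lra) HF1) as [Ct Et].
    rewrite Ct. split; [lra|]. split; [lra|]. right. rewrite Et, Cmod_R.
    rewrite Rabs_left by lra. lra.
  - split.
    + intros r [Hr Hconv]. destruct (Rle_or_lt r r0) as [Hle|Hlt]; auto. exfalso.
      destruct (pick M alpha r0 r HM Ha Hr0 Heq Hlt) as [t [Ht0 [Htr [Ht1 [HF1 Hwt]]]]].
      destruct (Hw t ltac:(lra) HF1) as [Ct Et].
      destruct (Hconv fe Hfe fe1 fe2 Hde (RtoC t) ltac:(rewrite Ct; lra)) as [_ Hre].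
      replace (RtoC t * fe2 (RtoC t) / fe1 (RtoC t))%C with
        (RtoC t * fe2 (RtoC t) / fe1 (RtoC t))%C in Hre by reflexivity.
      rewrite Et in Hre. rewrite <- RtoC_plus, re_RtoC in Hre. lra.
    + intros b Hb. apply Hb. split; [lra|].
      intros f Hf f1 f2 Hd z Hz.
      destruct (main_est M alpha r0 f f1 f2 z HM Ha Hr0 Heq Hf Hd ltac:(lra)) as [A [_ C]].
      split; auto. specialize (C Hz).
      rewrite re_plus. rewrite re_RtoC.
      pose proof (re_le_Cmod (z * f2 z / f1 z)%C) as H.
      apply Rabs_le_between in H. lra.
  - split.
    + intros r [Hr Hconv]. destruct (Rle_or_lt r r1) as [Hle|Hlt]; auto. exfalso.
      destruct (pick M (1/2) r1 r HM ltac:(lra) Hr1 Heq1 Hlt) as [t [Ht0 [Htr [Ht1 [HF1 Hwt]]]]].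
      destruct (Hw t ltac:(lra) HF1) as [Ct Et].
      destruct (Hconv fe Hfe fe1 fe2 Hde (RtoC t) ltac:(rewrite Ct; lra)) as [_ Hre].
      rewrite Et in Hre. rewrite <- RtoC_plus, re_RtoC, Cmod_R in Hre.
      rewrite Rabs_left in Hre by lra. lra.
    + intros b Hb. apply Hb. split; [lra|].
      intros f Hf f1 f2 Hd z Hz.
      destruct (main_est M (1/2) r1 f f1 f2 z HM ltac:(lra) Hr1 Heq1 Hf Hd ltac:(lra)) as [A [_ C]].
      split; auto. specialize (C Hz).
      rewrite re_plus. rewrite re_RtoC.
      pose proof (re_le_Cmod (z * f2 z / f1 z)%C) as H.
      apply Rabs_le_between in H. lra.
Qed.
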